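(* Let $(G,\gamma,b)$ be an RES-graph and let $(\hat G,\hat\gamma,b)$ be a reduction of $(G,\gamma,b)$ with $\tilde{\nu}(\hat G,\hat\gamma,b)\le\tilde{\nu}(G,\gamma,b)+1$. If $(\hat G,\hat\gamma,b)$ has a certificate, then $(G,\gamma,b)$ also has a certificate.
   Context: Graphs are finite and may have loops and multiple edges. Each edge is an unordered pair of half-edges; each half-edge is incident to a vertex, and a loop contributes $2$ to the degree of its vertex. An arc is an ordered pair of half-edges forming an edge, with tail (vertex of the first half-edge) and head (vertex of the second). A trail is a sequence of arcs with pairwise distinct edges, the head of each arc being the tail of the next. A circuit is a trail whose head equals its tail. A circuit hits $v$ if it contains an arc incident to $v$. A circuit-decomposition is a collection of circuits using each edge exactly once. A graph is Eulerian if it is connected and all degrees are even. A signature is a function $\gamma:E(G)\to\mathbb{Z}_2$. The weight of a trail is the $\mathbb{Z}_2$-sum of $\gamma$ over its edges, and a trail is zero or non-zero accordingly. Shifting at a vertex $v$ adds $1$ to the weight of every non-loop edge at $v$. A shifting of $\gamma$ is any signature obtained from $\gamma$ by a sequence of shiftings at vertices. An RES-graph is a triple $(G,\gamma,b)$ with $G$ Eulerian, $\gamma$ a signature, and $b\in V(G)$. The flooding number $\tilde{\nu}(G,\gamma,b)$ is the maximum size of a circuit-decomposition in which every circuit is non-zero and hits $b$; it is $0$ if none exists. For $X\subseteq V(G)$, $E(X)$ and $\delta(X)$ are the sets of edges with both ends, respectively exactly one end, in $X$. For an edge set $F$, $\gamma'(F)$ is the number of edges of $F$ with weight $1$ under $\gamma'$.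 A set $Y$ is $\gamma'$-odd if the parity of $\gamma'(E(Y)\cup\delta(Y))$ differs from that of $|\delta(Y)|/2$, and $\mathrm{odd}_{\gamma'}(G-X)$ is the number of components of $G-X$ whose vertex sets are $\gamma'$-odd. A certificate for $(G,\gamma,b)$ is a pair $(X,\gamma')$ where $\gamma'$ is a shifting of $\gamma$ and $b\in X\subseteq V(G)$, such that $$\tilde{\nu}(G,\gamma,b)=\gamma'(E(X))+\tfrac12|\delta(X)|-\mathrm{odd}_{\gamma'}(G-X).$$ Let $e=\{h,r\}$ be an edge of $G-b$. An $e$-reduction of $(G,\gamma,b)$ is any RES-graph $(\hat G,\hat\gamma,b)$ constructed as follows. Take new half-edges $h',r'$ at $b$ forming a transition $\{h',r'\}$ at $b$. The graph $\hat G$ is obtained from $G$ by deleting $e$ and adding the edges $\{h,h'\}$ and $\{r,r'\}$. The signature $\hat\gamma$ agrees with $\gamma$ on the other edges, and $\hat\gamma(\{h,h'\})+\hat\gamma(\{r,r'\})=\gamma(e)$ in $\mathbb{Z}_2$. A reduction of $(G,\gamma,b)$ is an $e$-reduction for some edge $e$ of $G-b$. *)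

(* Defs.v *)
From mathcomp Require Import all_boot all_order all_algebra.
From Stdlib Require Import ClassicalEpsilon.
Set Implicit Arguments. Unset Strict Implicit. Unset Printing Implicit Defensive.

(* A graph on vertex type V with edge type E: edge x consists of the two
   half-edges (x,false) and (x,true); [ends x d] is the vertex incident to
   half-edge (x,d). *)
Section Graphs.
Variables (V E : finType) (ends : E -> bool -> V).

Definition degree (v : V) : nat := #|[set h : E * bool | ends h.1 h.2 == v]|.

Definition adj (u v : V) : bool :=
  [exists x, ((ends x false == u) && (ends x true == v))
          || ((ends x false == v) && (ends x true == u))].

Definition eulerian : Prop :=
  (forall u v, connect adj u v) /\ (forall v, ~~ odd (degree v)).

(* arcs: (x, d) is the ordered pair of half-edges ((x,d),(x,~~d)) *)
Definition tail (a : E * bool) : V := ends a.1 a.2.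
Definition head (a : E * bool) : V := ends a.1 (~~ a.2).

Definition is_trail (s : seq (E * bool)) : bool :=
  uniq [seq a.1 | a <- s] &&
  (if s is a :: s' then path (fun a1 a2 => head a1 == tail a2) a s' else true).

Definition is_circuit (s : seq (E * bool)) : bool :=
  is_trail s && (if s is a :: s' then head (last a s') == tail a else false).

Definition hits (v : V) (s : seq (E * bool)) : bool :=
  has (fun a => (tail a == v) || (head a == v)) s.

Definition nonzero (gam : E -> bool) (s : seq (E * bool)) : bool :=
  odd (count (fun a => gam a.1) s).

Definition circuit_decomposition (D : seq (seq (E * bool))) : bool :=
  all is_circuit D && perm_eq (flatten [seq [seq a.1 | a <- c] | c <- D]) (enum E).

Definition flooding_decomposition (gam : E -> bool) (b : V)
    (D : seq (seq (E * bool))) : bool :=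
  circuit_decomposition D && all (fun c => nonzero gam c && hits b c) D.

Definition is_flooding_number (gam : E -> bool) (b : V) (n : nat) : Prop :=
  ((exists D, flooding_decomposition gam b D /\ size D = n) /\
   (forall D, flooding_decomposition gam b D -> size D <= n))
  \/ (n = 0 /\ forall D, ~ flooding_decomposition gam b D).

Definition flooding_number (gam : E -> bool) (b : V) : nat :=
  epsilon (inhabits 0) (is_flooding_number gam b).

(* shifting at v flips the weight of every non-loop edge at v *)
Definition shift (v : V) (gam : E -> bool) : E -> bool :=
  fun x => if (ends x false == v) (+) (ends x true == v) then ~~ gam x else gam x.

Definition is_shifting (gam gam' : E -> bool) : Prop :=
  exists s : seq V, gam' = foldl (fun g v => shift v g) gam s.

Definition inner_edges (X : {set V}) : {set E} :=
  [set x | (ends x false \in X) && (ends x true \in X)].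
Definition cut_edges (X : {set V}) : {set E} :=
  [set x | (ends x false \in X) != (ends x true \in X)].
Definition wcount (gam : E -> bool) (F : {set E}) : nat := #|[set x in F | gam x]|.

Definition is_odd_set (gam : E -> bool) (Y : {set V}) : bool :=
  odd (wcount gam (inner_edges Y :|: cut_edges Y)) != odd (#|cut_edges Y|./2).

Definition adj_out (X : {set V}) (u v : V) : bool :=
  (u \notin X) && (v \notin X) && adj u v.

Definition is_component_out (X : {set V}) (C : {set V}) : bool :=
  [exists u, (u \notin X) && (C == [set v | connect (adj_out X) u v])].

Definition odd_components (gam : E -> bool) (X : {set V}) : nat :=
  #|[set C : {set V} | is_component_out X C && is_odd_set gam C]|.

Local Open Scope ring_scope.
Definition is_certificate (gam : E -> bool) (b : V) (X : {set V})
    (gam' : E -> bool) : Prop :=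
  is_shifting gam gam' /\ b \in X /\
  (flooding_number gam b)%:Z =
    (wcount gam' (inner_edges X) + #|cut_edges X|./2)%:Z
    - (odd_components gam' X)%:Z.

Definition has_certificate (gam : E -> bool) (b : V) : Prop :=
  exists X gam', is_certificate gam b X gam'.
End Graphs.

(* e-reduction: delete e = {h,r} (h = (e,false), r = (e,true)) and add edges
   {h,h'} (inr true) and {r,r'} (inr false), with h', r' new half-edges at b
   (the "true" half-edge of each new edge). *)
Definition red_edge (E : finType) (e : E) : finType :=
  ({x : E | x != e} + bool)%type.

Definition red_ends (V E : finType) (ends : E -> bool -> V) (b : V) (e : E)
    (y : red_edge e) (d : bool) : V :=
  match y with
  | inl x => ends (val x) d
  | inr true => if d then b else ends e false
  | inr false => if d then b else ends e true
  end.

(* Main.v *)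
Require Import Defs.
From mathcomp Require Import all_boot all_order all_algebra.
From mathcomp Require Import zify.
From Stdlib Require Import ClassicalEpsilon Classical.
Set Implicit Arguments. Unset Strict Implicit. Unset Printing Implicit Defensive.

Lemma card_count (T : finType) (P : pred T) : #|[set x | P x]| = count P (enum T).
Proof. rewrite cardsE cardE /enum_mem size_filter; congr (count _ _).
by rewrite -{1}(filter_predT (Finite.enum T)); apply: eq_filter. Qed.

Section Gen.
Variables (V E : finType) (ends : E -> bool -> V).

Definition arel := fun a1 a2 : E * bool => Defs.head ends a1 == Defs.tail ends a2.

Lemma circuitE (s : seq (E * bool)) :
  is_circuit ends s = [&& s != [::], uniq [seq a.1 | a <- s] & cycle arel s].
Proof.
case: s => [|a s] //=; rewrite /is_circuit /is_trail /= rcons_path.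
by rewrite andbA.
Qed.

Lemma crossing_path (Y : pred V) a s :
  path arel a s ->
  odd (count (fun a => (Defs.tail ends a \in Y) != (Defs.head ends a \in Y)) (a :: s)) =
  ((Defs.tail ends a \in Y) != (Defs.head ends (last a s) \in Y)).
Proof.
elim: s a => [|a' s IH] a /=; first by rewrite addn0; case: (_ != _).
move=> /andP [/eqP ha hp]; have /= IH' := IH a' hp.
rewrite oddD IH' -ha.
by case: (Defs.tail _ _ \in Y); case: (Defs.head _ a \in Y); case: (Defs.head _ _ \in Y).
Qed.

Lemma crossing_circuit (Y : pred V) s : is_circuit ends s ->
  ~~ odd (count (fun a => (Defs.tail ends a \in Y) != (Defs.head ends a \in Y)) s).
Proof.
case: s => [|a s] //; rewrite /is_circuit /is_trail => /andP [/andP [_ hp] /eqP hl].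
by rewrite crossing_path // hl; case: (_ \in Y).
Qed.

Lemma cut_arc (Y : {set V}) (a : E * bool) :
  (a.1 \in cut_edges ends Y) = ((Defs.tail ends a \in Y) != (Defs.head ends a \in Y)).
Proof.
rewrite /cut_edges inE /tail /head; case: a => x [] //=.
by case: (_ \in Y); case: (_ \in Y).
Qed.

Lemma crossing_cut (Y : {set V}) s : is_circuit ends s ->
  ~~ odd (count (fun a => a.1 \in cut_edges ends Y) s).
Proof.
move=> hc; rewrite (eq_count (a2 := fun a => (Defs.tail ends a \in Y) != (Defs.head ends a \in Y))).
  exact: crossing_circuit.
by move=> a; rewrite cut_arc.
Qed.

Lemma count_xor (T : Type) (p q : pred T) s :
  odd (count (fun x => p x (+) q x) s) = odd (count p s) (+) odd (count q s).
Proof.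
elim: s => //= x s IH; rewrite !oddD IH.
by case: (p x); case: (q x); case: (odd (count p s)); case: (odd (count q s)).
Qed.

Lemma shift_circuit v g s : is_circuit ends s ->
  odd (count (fun a => shift ends v g a.1) s) = odd (count (fun a => g a.1) s).
Proof.
move=> hc.
rewrite (eq_count (a2 := fun a => g a.1 (+) (a.1 \in cut_edges ends [set v]))).
  by rewrite count_xor (negbTE (crossing_cut _ hc)) addbF.
move=> [x d] /=; rewrite /shift /cut_edges !inE.
by case: (ends x false == v); case: (ends x true == v); case: (g x).
Qed.

Lemma shifting_circuit g g' s : is_shifting ends g g' -> is_circuit ends s ->
  odd (count (fun a => g' a.1) s) = odd (count (fun a => g a.1) s).
Proof.
move=> [l ->] hc; elim: l g => //= v l IH g.
by rewrite IH shift_circuit.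
Qed.

Lemma count_map_fst (P : pred E) (s : seq (E * bool)) :
  count (fun a => P a.1) s = count P [seq a.1 | a <- s].
Proof. by rewrite count_map. Qed.

Lemma decomp_sum D (P : pred E) : circuit_decomposition ends D ->
  \sum_(C <- D) count (fun a => P a.1) C = #|[set x | P x]|.
Proof.
move=> /andP [_ hp]; rewrite card_count -(permP hp) count_flatten.
elim: D {hp} => [|C D IH]; first by rewrite big_nil.
by rewrite big_cons /= IH count_map.
Qed.

End Gen.

Section Comp.
Variables (V E : finType) (ends : E -> bool -> V).
Implicit Types (X Y C : {set V}) (v u z : V) (x : E).

Definition comp (X : {set V}) v := [set z | connect (adj_out ends X) v z].
Definition comps X := [set comp X v | v in ~: X].
Definition touch (Y : {set V}) x := (ends x false \in Y) || (ends x true \in Y).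

Lemma adj_sym u v : adj ends u v = adj ends v u.
Proof.
by apply/existsP/existsP => -[x hx]; exists x; rewrite orbC.
Qed.

Lemma adj_out_sym (X : {set V}) : connect_sym (adj_out ends X).
Proof.
apply: sym_connect_sym => u v; rewrite /adj_out adj_sym.
by case: (u \in X); case: (v \in X).
Qed.

Lemma adj_edge (X : {set V}) x : ends x false \notin X -> ends x true \notin X ->
  adj_out ends X (ends x false) (ends x true).
Proof.
move=> h0 h1; rewrite /adj_out h0 h1 /=; apply/existsP; exists x.
by rewrite !eqxx.
Qed.

Lemma adj_outP (X : {set V}) u v : adj_out ends X u v ->
  [/\ u \notin X, v \notin X & exists x,
    ((ends x false == u) && (ends x true == v))
          || ((ends x false == v) && (ends x true == u))].
Proof. by move=> /andP [/andP [hu hv] /existsP hx]. Qed.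

Lemma comp_outside X v z : v \notin X -> z \in comp X v -> z \notin X.
Proof.
move=> hv; rewrite inE => hc.
have hcl : closed (adj_out ends X) (mem (~: X)).
  move=> x y /andP [/andP [hx hy] _]; by rewrite !inE hx hy.
by have := closed_connect hcl hc; rewrite !inE hv => <-.
Qed.

Lemma comp_self X v : v \in comp X v.
Proof. by rewrite inE connect0. Qed.

Lemma comp_eq X v z : z \in comp X v -> comp X z = comp X v.
Proof.
rewrite inE => hc; apply/setP => t; rewrite !inE.
by rewrite (same_connect (adj_out_sym X) hc).
Qed.

Lemma in_comps X Y z : Y \in comps X ->
  (z \in Y) = (z \notin X) && (Y == comp X z).
Proof.
move=> /imsetP [y0]; rewrite inE => hy0 ->.
apply/idP/idP.
  move=> hz; rewrite (comp_outside hy0 hz) /=; by rewrite (comp_eq hz).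
by move=> /andP [_ /eqP ->]; exact: comp_self.
Qed.

Lemma comp_in_comps X v : v \notin X -> comp X v \in comps X.
Proof. by move=> hv; apply/imsetP; exists v; rewrite ?inE. Qed.

Lemma is_component_outE X C : is_component_out ends X C = (C \in comps X).
Proof.
apply/existsP/imsetP => -[u].
  by move=> /andP [hu /eqP ->]; exists u; rewrite ?inE.
by rewrite inE => hu ->; exists u; rewrite hu eqxx.
Qed.

Lemma sum_eq1 X c : c \in comps X -> \sum_(Y in comps X) (Y == c) = 1.
Proof.
move=> hc; rewrite (bigD1 c) //= eqxx big1 // => Y /andP [_ /negbTE ->] //.
Qed.

Lemma sum_touch X x :
  \sum_(Y in comps X) touch Y x = ~~ (x \in inner_edges ends X).
Proof.
rewrite /inner_edges inE /touch.
case h0: (ends x false \in X); case h1: (ends x true \in X) => /=.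
- rewrite big1 // => Y hY; by rewrite !(in_comps _ hY) h0 h1.
- under eq_bigr => Y hY do rewrite !(in_comps _ hY) h0 h1 /=.
  by rewrite sum_eq1 // comp_in_comps // h1.
- under eq_bigr => Y hY do rewrite !(in_comps _ hY) h0 h1 /= orbF.
  by rewrite sum_eq1 // comp_in_comps // h0.
- have ha := adj_edge (negbT h0) (negbT h1).
  have he : comp X (ends x true) = comp X (ends x false).
    by apply: comp_eq; rewrite inE connect1.
  under eq_bigr => Y hY do rewrite !(in_comps _ hY) h0 h1 he /= orbb.
  by rewrite sum_eq1 // comp_in_comps // h0.
Qed.

Lemma sum_cut X x :
  \sum_(Y in comps X) (x \in cut_edges ends Y) = (x \in cut_edges ends X).
Proof.
under eq_bigr => Y hY do rewrite /cut_edges inE !(in_comps _ hY).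
rewrite /cut_edges inE.
case h0: (ends x false \in X); case h1: (ends x true \in X) => /=.
- by rewrite big1.
- under eq_bigr => Y hY do rewrite eq_sym eqbF_neg negbK.
  by rewrite sum_eq1 // comp_in_comps // h1.
- under eq_bigr => Y hY do rewrite eqbF_neg negbK.
  by rewrite sum_eq1 // comp_in_comps // h0.
- have ha := adj_edge (negbT h0) (negbT h1).
  have he : comp X (ends x true) = comp X (ends x false).
    by apply: comp_eq; rewrite inE connect1.
  by rewrite he big1 // => Y _; rewrite eqxx.
Qed.

Lemma count_part X (Q : pred E) s :
  count Q s = count (fun x => (x \in inner_edges ends X) && Q x) s +
    \sum_(Y in comps X) count (fun x => touch Y x && Q x) s.
Proof.
elim: s => [|x s IH] /=; first by rewrite big1.
rewrite big_split /= {1}IH.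
have hq : (Q x : nat) = ((x \in inner_edges ends X) && Q x) +
   \sum_(Y in comps X) (touch Y x && Q x).
  case: (Q x) => /=.
    by under eq_bigr => Y _ do rewrite andbT; rewrite sum_touch andbT; case: (_ \in _).
  by rewrite andbF big1 // => Y _; rewrite andbF.
by rewrite hq addnACA.
Qed.

Lemma count_cut_part X s :
  count (mem (cut_edges ends X)) s =
    \sum_(Y in comps X) count (mem (cut_edges ends Y)) s.
Proof.
elim: s => [|x s IH] /=; first by rewrite big1.
by rewrite big_split /= IH sum_cut.
Qed.

Lemma odd_componentsE g X :
  odd_components ends g X = \sum_(Y in comps X) is_odd_set ends g Y.
Proof.
rewrite /odd_components -sum1dep_card big_mkcond /= [RHS]big_mkcond /=.
apply: eq_bigr => Y _; rewrite is_component_outE.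
by case: (Y \in comps X); case: (is_odd_set _ _ _).
Qed.

Lemma touch_setE Y : inner_edges ends Y :|: cut_edges ends Y = [set x | touch Y x].
Proof.
apply/setP => x; rewrite !inE /touch.
by case: (_ \in Y); case: (_ \in Y).
Qed.

End Comp.

Lemma even_sum (I : Type) (r : seq I) (P : pred I) (F : I -> nat) :
  (forall i, P i -> ~~ odd (F i)) -> ~~ odd (\sum_(i <- r | P i) F i).
Proof.
move=> h; apply: (big_ind (fun n => ~~ odd n)) => //.
by move=> m n hm hn; rewrite oddD (negbTE hm) (negbTE hn).
Qed.

Lemma sum_half (I : Type) (r : seq I) (P : pred I) (F : I -> nat) :
  (forall i, P i -> ~~ odd (F i)) ->
  \sum_(i <- r | P i) (F i)./2 = (\sum_(i <- r | P i) F i)./2.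
Proof.
move=> h.
have -> : \sum_(i <- r | P i) F i = (\sum_(i <- r | P i) (F i)./2).*2.
  rewrite (big_morph double doubleD (erefl (0.*2))).
  by apply: eq_bigr => i hi; rewrite even_halfK // h.
by rewrite doubleK.
Qed.

Lemma even_sum_seq (I : eqType) (r : seq I) (F : I -> nat) :
  (forall i, i \in r -> ~~ odd (F i)) -> ~~ odd (\sum_(i <- r) F i).
Proof. by move=> h; rewrite big_seq_cond; apply: even_sum => i /andP [hi _]; apply: h. Qed.

Lemma sum_half_seq (I : eqType) (r : seq I) (F : I -> nat) :
  (forall i, i \in r -> ~~ odd (F i)) ->
  \sum_(i <- r) (F i)./2 = (\sum_(i <- r) F i)./2.
Proof.
move=> h; rewrite big_seq_cond [in RHS]big_seq_cond sum_half //.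
by move=> i /andP [hi _]; apply: h.
Qed.

Lemma card_countA (T : finType) (A : {set T}) : #|A| = #|[set x | x \in A]|.
Proof. by apply: eq_card => x; rewrite inE. Qed.

Lemma odd_pos (n : nat) : odd n -> 0 < n.
Proof. by case: n. Qed.

Lemma arith1 (a k m : nat) (nz : bool) : m <= k -> nz = odd (a + k + m) -> nz + m <= a + k.
Proof.
move=> hmk hnz; have := odd_double_half (a + k + m); rewrite -hnz -muln2.
case: nz {hnz} => /= h; last by lia.
case: (leqP (m.+1) (a + k)) => // hlt.
have ha : a + k = m by lia.
lia.
Qed.

Section Dual.
Variables (V E : finType) (ends : E -> bool -> V).

Lemma decomp_sum' D (P : pred E) : circuit_decomposition ends D ->
  \sum_(C <- D) count P [seq a.1 | a <- C] = #|[set x | P x]|.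
Proof.
move=> hD; rewrite -(decomp_sum _ hD); apply: eq_bigr => C _.
by rewrite count_map.
Qed.

Lemma crossing_cut' (Y : {set V}) s : is_circuit ends s ->
  ~~ odd (count (mem (cut_edges ends Y)) [seq a.1 | a <- s]).
Proof. by move=> hc; rewrite count_map; exact: crossing_cut. Qed.

Lemma nostep_path (Y : {set V}) a s : path (arel ends) a s ->
  count (fun a => (Defs.tail ends a \in Y) != (Defs.head ends a \in Y)) (a :: s) = 0 ->
  forall a', a' \in a :: s ->
   ((Defs.tail ends a' \in Y) = (Defs.tail ends a \in Y)) /\
   ((Defs.head ends a' \in Y) = (Defs.tail ends a \in Y)).
Proof.
elim: s a => [|a1 s IH] a /=.
  rewrite addn0 => _ h a'; rewrite inE => /eqP ->; split => //.
  by move: h; case: (_ \in Y); case: (_ \in Y).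
move=> /andP [/eqP ha hp] h a'; rewrite inE => /orP [/eqP ->|ha'].
  by split => //; move: h; case: (_ \in Y); case: (_ \in Y).
move: h => /eqP; rewrite addn_eq0 => /andP [h1 /eqP h2].
have [-> ->] := IH a1 hp h2 a' ha'.
move: h1; rewrite eqb0 negbK => /eqP h1.
by rewrite -ha h1.
Qed.

Lemma avoid (Y : {set V}) b C : is_circuit ends C -> hits ends b C -> b \notin Y ->
  count (mem (cut_edges ends Y)) [seq a.1 | a <- C] = 0 ->
  count (touch ends Y) [seq a.1 | a <- C] = 0.
Proof.
case: C => [|a s] //; rewrite /is_circuit /is_trail => /andP [/andP [_ hp] _] hb hbY.
rewrite count_map (eq_count (a2 := fun a => (Defs.tail ends a \in Y) != (Defs.head ends a \in Y))); last first.
  by move=> a' /=; rewrite -cut_arc.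
move=> h0; have hn := nostep_path hp h0.
have ha : (Defs.tail ends a \in Y) = false.
  move: hb => /hasP [a' ha' /orP [/eqP hb|/eqP hb]].
    by have [<- _] := hn _ ha'; rewrite hb (negbTE hbY).
  by have [_ <-] := hn _ ha'; rewrite hb (negbTE hbY).
apply/eqP; rewrite -leqn0 leqNgt -has_count; apply/hasP => -[x /mapP [a' ha' ->]].
have [h1 h2] := hn _ ha'; move: h1 h2; rewrite /touch /Defs.tail /Defs.head ha.
by case: a' ha' => x' [] _ /= -> ->.
Qed.

Variables (g g' : E -> bool) (X : {set V}) (b : V) (D : seq (seq (E * bool))).
Hypotheses (hsh : is_shifting ends g g') (hbX : b \in X)
  (hD : circuit_decomposition ends D) (hhit : all (hits ends b) D).

Let hcirc : forall C, C \in D -> is_circuit ends C.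
Proof. by move: hD => /andP [/allP h _]. Qed.

Let hhitC : forall C, C \in D -> hits ends b C.
Proof. by move/allP: hhit. Qed.

Let aC (C : seq (E * bool)) := count (fun x => (x \in inner_edges ends X) && g' x) [seq a.1 | a <- C].
Let cXC (C : seq (E * bool)) := count (mem (cut_edges ends X)) [seq a.1 | a <- C].
Let wC (C : seq (E * bool)) Y := count (fun x => touch ends Y x && g' x) [seq a.1 | a <- C].
Let cC (C : seq (E * bool)) Y := count (mem (cut_edges ends Y)) [seq a.1 | a <- C].
Let dC (C : seq (E * bool)) Y := odd (wC C Y) != odd ((cC C Y)./2).
Let mC (C : seq (E * bool)) := \sum_(Y in comps ends X) dC C Y.

Let hbY Y : Y \in comps ends X -> b \notin Y.
Proof. by move=> hY; rewrite (in_comps _ hY) hbX. Qed.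

Let d_le C Y : C \in D -> Y \in comps ends X -> dC C Y <= (cC C Y)./2.
Proof.
move=> hC hY; case hc: (cC C Y) => [|n].
  have := avoid (hcirc hC) (hhitC hC) (hbY hY) hc.
  rewrite /dC hc /wC => h0.
  suff -> : count (fun x => touch ends Y x && g' x) [seq a.1 | a <- C] = 0 by [].
  apply/eqP; rewrite -leqn0 -h0; apply: sub_count => x /andP [] //.
have := crossing_cut' Y (hcirc hC); rewrite -/(cC C Y) hc => hev.
case: (dC C Y) => //=; case: n hc hev => //.
Qed.

Let per_circuit C : C \in D -> nonzero g C + mC C <= aC C + (cXC C)./2.
Proof.
move=> hC; apply: arith1.
  rewrite /mC /cXC count_cut_part -sum_half; last first.
    by move=> Y _; exact: crossing_cut' (hcirc hC).
  by apply: leq_sum => Y hY; apply: d_le.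
have hw : count g' [seq a.1 | a <- C] = aC C + \sum_(Y in comps ends X) wC C Y.
  exact: count_part.
have hev : ~~ odd (\sum_(Y in comps ends X) (wC C Y + (cC C Y)./2 + dC C Y)).
  apply: even_sum => Y _; rewrite /dC !oddD.
  by case: (odd (wC C Y)); case: (odd (cC C Y)./2).
have hk : (cXC C)./2 = \sum_(Y in comps ends X) (cC C Y)./2.
  rewrite /cXC count_cut_part -sum_half //.
  by move=> Y _; exact: crossing_cut' (hcirc hC).
rewrite /nonzero -(shifting_circuit hsh (hcirc hC)) count_map_fst hw.
rewrite !big_split /= in hev.
rewrite hk /mC; move: hev; rewrite !oddD.
by case: (odd (aC C)); case: (odd (\sum_(Y in _) wC C Y));
  case: (odd (\sum_(Y in _) (cC C Y)./2)); case: (odd (\sum_(Y in _) dC C Y)).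
Qed.

Let sum_d Y : Y \in comps ends X -> is_odd_set ends g' Y <= \sum_(C <- D) dC C Y.
Proof.
move=> hY.
have hw : wcount g' (inner_edges ends Y :|: cut_edges ends Y) = \sum_(C <- D) wC C Y.
  rewrite /wcount (decomp_sum' _ hD) touch_setE; apply: eq_card => x.
  by rewrite !inE.
have hc : #|cut_edges ends Y|./2 = \sum_(C <- D) (cC C Y)./2.
  rewrite sum_half_seq; last by move=> C hC; apply: crossing_cut'; apply: hcirc.
  by rewrite (decomp_sum' _ hD) -card_countA.
have hev : ~~ odd (\sum_(C <- D) (wC C Y + (cC C Y)./2 + dC C Y)).
  apply: even_sum => C _; rewrite /dC !oddD.
  by case: (odd (wC C Y)); case: (odd (cC C Y)./2).
rewrite !big_split /= in hev.
rewrite /is_odd_set hw hc.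
move: hev; rewrite !oddD.
case: (odd (\sum_(C <- D) wC C Y)); case: (odd (\sum_(C <- D) (cC C Y)./2));
  case h: (odd (\sum_(C <- D) dC C Y)) => //= _; exact: odd_pos.
Qed.

Lemma weak_duality :
  count (nonzero g) D + odd_components ends g' X <=
  wcount g' (inner_edges ends X) + #|cut_edges ends X|./2.
Proof.
have h1 : odd_components ends g' X <= \sum_(C <- D) mC C.
  rewrite odd_componentsE /mC exchange_big /=.
  by apply: leq_sum => Y hY; apply: sum_d.
have h2 : \sum_(C <- D) (nonzero g C + mC C) <= \sum_(C <- D) (aC C + (cXC C)./2).
  by rewrite big_seq_cond [X in _ <= X]big_seq_cond; apply: leq_sum => C /andP [hC _]; apply: per_circuit.
have h3 : \sum_(C <- D) aC C = wcount g' (inner_edges ends X).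
  by rewrite /aC (decomp_sum' _ hD).
have h4 : \sum_(C <- D) (cXC C)./2 = #|cut_edges ends X|./2.
  rewrite sum_half_seq; last by move=> C hC; apply: crossing_cut'; apply: hcirc.
  by rewrite /cXC (decomp_sum' _ hD) -card_countA.
have h5 : \sum_(C <- D) (nonzero g C : nat) = count (nonzero g) D.
  by rewrite -sum1_count [RHS]big_mkcond.
rewrite !big_split /= h3 h4 h5 in h2.
lia.
Qed.

End Dual.

Lemma odd_sum_odd (I : Type) (r : seq I) (F : I -> nat) :
  odd (\sum_(i <- r) F i) = odd (\sum_(i <- r) (odd (F i) : nat)).
Proof.
apply: (big_ind2 (fun m n => odd m = odd n)) => //.
  by move=> m1 m2 n1 n2 h1 h2; rewrite !oddD h1 h2.
by move=> i; case: (odd (F i)).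
Qed.

Section Parity.
Variables (V E : finType) (ends : E -> bool -> V).

Lemma decomp_weight_parity g g' D : is_shifting ends g g' -> circuit_decomposition ends D ->
  odd #|[set x | g' x]| = odd (count (nonzero g) D).
Proof.
move=> hsh hD; rewrite -(decomp_sum' _ hD) odd_sum_odd -sum1_count [in RHS]big_mkcond.
rewrite big_seq_cond [in RHS]big_seq_cond; congr (odd _); apply: eq_bigr => C /andP [hC _].
move: hD => /andP [/allP hc _].
by rewrite -count_map_fst (shifting_circuit hsh (hc C hC)) /nonzero; case: (odd _).
Qed.

Lemma cut_even D (Y : {set V}) : circuit_decomposition ends D -> ~~ odd #|cut_edges ends Y|.
Proof.
move=> hD; rewrite card_countA -(decomp_sum' _ hD); apply: even_sum_seq => C hC.
move: hD => /andP [/allP hc _]; exact: crossing_cut' (hc C hC).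
Qed.

Lemma bound_parity g' (X : {set V}) D : circuit_decomposition ends D ->
  odd (wcount g' (inner_edges ends X) + #|cut_edges ends X|./2 + odd_components ends g' X)
  = odd #|[set x | g' x]|.
Proof.
move=> hD.
have hW : forall Y, count (fun x => touch ends Y x && g' x) (enum E) =
    wcount g' (inner_edges ends Y :|: cut_edges ends Y).
  move=> Y; rewrite /wcount touch_setE -card_count; apply: eq_card => x; by rewrite !inE.
have hc : #|cut_edges ends X| = \sum_(Y in comps ends X) #|cut_edges ends Y|.
  rewrite card_countA card_count count_cut_part; apply: eq_bigr => Y _.
  by rewrite card_countA card_count.
have hc2 : #|cut_edges ends X|./2 = \sum_(Y in comps ends X) #|cut_edges ends Y|./2.
  by rewrite hc sum_half // => Y _; apply: cut_even hD.
have hg : #|[set x | g' x]| = wcount g' (inner_edges ends X) +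
    \sum_(Y in comps ends X) wcount g' (inner_edges ends Y :|: cut_edges ends Y).
  rewrite card_count (count_part ends X) /wcount card_count.
  by congr (_ + _); apply: eq_bigr => Y _; rewrite hW.
have hev : ~~ odd (\sum_(Y in comps ends X)
    (wcount g' (inner_edges ends Y :|: cut_edges ends Y) + #|cut_edges ends Y|./2
      + is_odd_set ends g' Y)).
  apply: even_sum => Y _; rewrite /is_odd_set !oddD.
  by case: (odd (wcount _ _)); case: (odd _./2).
rewrite !big_split /= in hev.
rewrite hg hc2 odd_componentsE; move: hev; rewrite !oddD.
by case: (odd (wcount g' (inner_edges ends X))); case: (odd (\sum_(Y in _) wcount _ _));
  case: (odd (\sum_(Y in _) _./2)); case: (odd (\sum_(Y in _) is_odd_set _ _ _)).
Qed.

End Parity.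

Lemma max_exists (P : nat -> Prop) m n0 : P n0 -> (forall k, P k -> k <= m) ->
  exists n, P n /\ forall k, P k -> k <= n.
Proof.
elim: m n0 => [|m IH] n0 hn0 hb.
  by exists n0; split => // k /hb; rewrite leqn0 => /eqP ->.
case: (classic (P m.+1)) => hm.
  by exists m.+1; split => // k /hb.
apply: (IH n0 hn0) => k hk; have := hb k hk; rewrite leq_eqVlt => /orP [/eqP hkm|//].
by move: hk; rewrite hkm.
Qed.

Section Flood.
Variables (V E : finType) (ends : E -> bool -> V).

Lemma size_flat_ge (D : seq (seq (E * bool))) : all (is_circuit ends) D ->
  size D <= size (flatten [seq [seq a.1 | a <- C] | C <- D]).
Proof.
elim: D => //= C D IH /andP [hC hD]; rewrite size_cat size_map.
by case: C hC => // a C _; rewrite /= ltnS (leq_trans (IH hD)) // leq_addl.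
Qed.

Lemma flood_size_le g b D : flooding_decomposition ends g b D -> size D <= #|E|.
Proof.
move=> /andP [/andP [hc hp] _]; rewrite cardT -(perm_size hp).
exact: size_flat_ge.
Qed.

Lemma flooding_spec g b : is_flooding_number ends g b (flooding_number ends g b).
Proof.
rewrite /flooding_number; apply: epsilon_spec.
case: (classic (exists D, flooding_decomposition ends g b D)) => [[D hD]|hn].
  have hb : forall k, (exists D, flooding_decomposition ends g b D /\ size D = k) -> k <= #|E|.
    by move=> k [D' [h <-]]; exact: flood_size_le h.
  have [n [[D' [hD' hs]] hmax]] :=
    max_exists (P := fun n => exists D, flooding_decomposition ends g b D /\ size D = n)
      (m := #|E|) (ex_intro _ D (conj hD erefl)) hb.
  exists n; left; split; first by exists D'.
  by move=> D2 h2; apply: hmax; exists D2.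
by exists 0; right; split => // D hD; apply: hn; exists D.
Qed.

End Flood.

Section Euler.
Variables (V E : finType) (ends : E -> bool -> V).

Lemma trail_size s : is_trail ends s -> size s <= #|E|.
Proof.
move=> /andP [hu _]; rewrite -(size_map fst) -(card_uniqP hu); exact: max_card.
Qed.

Lemma trail_ext a s x d : is_trail ends (a :: s) -> x \notin [seq a.1 | a <- a :: s] ->
  ends x d = Defs.head ends (last a s) -> is_trail ends (rcons (a :: s) (x, d)).
Proof.
rewrite /is_trail => /andP [hu hp] hx hd.
rewrite map_rcons rcons_uniq hx hu /= -cats1 cat_path hp /= andbT.
by rewrite /tail /= hd.
Qed.

Lemma count_all_in (A : {set E}) s : uniq s -> {subset A <= s} -> count (mem A) s = #|A|.
Proof.
move=> hu hs; rewrite -size_filter; have hu' : uniq (filter (mem A) s) by apply: filter_uniq.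
rewrite -(card_uniqP hu'); apply: eq_card => x; rewrite mem_filter.
case hx: (x \in A) => /=; rewrite hx // /=; exact: hs.
Qed.

Lemma card_sum_bool (T : finType) (P : pred T) : #|[set x | P x]| = \sum_x (P x : nat).
Proof. by rewrite -sum1dep_card big_mkcond. Qed.

Lemma degree_cut v : odd (degree ends v) = odd #|cut_edges ends [set v]|.
Proof.
rewrite /degree card_sum_bool -(pair_bigA _ (fun x d => (ends (x, d).1 (x, d).2 == v) : nat)) /=.
rewrite card_countA card_sum_bool odd_sum_odd [in RHS]odd_sum_odd; congr (odd _).
apply: eq_bigr => x _; rewrite big_bool !inE /=.
by case: (ends x true == v); case: (ends x false == v).
Qed.

Hypothesis heul : eulerian ends.

Lemma euler_tour (e0 : E) :
  exists T, is_circuit ends T /\ perm_eq [seq a.1 | a <- T] (enum E).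
Proof.
have hb : forall k, (exists s, is_trail ends s /\ size s = k) -> k <= #|E|.
  by move=> k [s [h <-]]; exact: trail_size h.
have [n [[T [hT hsz]] hmax]] :=
  max_exists (P := fun n => exists s, is_trail ends s /\ size s = n) (m := #|E|) (n0 := 0)
    (ex_intro _ [::] (conj erefl erefl)) hb.
have hmax' : forall s, is_trail ends s -> size s <= n by move=> s hs; apply: hmax; exists s.
case: T hT hsz => [|a s] hT hsz.
  have : is_trail ends [:: (e0, false)] by [].
  by move/hmax'; rewrite -hsz.
have hcl : Defs.head ends (last a s) == Defs.tail ends a.
  apply/negPn/negP => hne.
  set t := Defs.head ends (last a s).
  have hodd : odd (count (mem (cut_edges ends [set t])) [seq a.1 | a <- a :: s]).
    rewrite count_map (eq_count (a2 := fun a => (Defs.tail ends a \in [set t]) != (Defs.head ends a \in [set t]))); last first.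
      by move=> a' /=; rewrite -cut_arc.
    move: hT => /andP [_ hp]; rewrite crossing_path // !inE eqxx.
    by rewrite [Defs.tail ends a == t]eq_sym (negbTE (hne : t != _)).
  have [x hx hxT] : exists2 x, x \in cut_edges ends [set t] & x \notin [seq a.1 | a <- a :: s].
    apply/exists_inP; apply/negP => /exists_inP hn.
    have hsub : {subset cut_edges ends [set t] <= [seq a.1 | a <- a :: s]}.
      move=> x hx; apply/negPn/negP => hx'; apply: hn; by exists x.
    move: hT => /andP [hu _].
    move: hodd; rewrite (count_all_in hu hsub) -degree_cut.
    by move: heul => [_ /(_ t) /negbTE ->].
  pose d := ~~ (ends x false == t).
  have hd : ends x d = t.
    move: hx; rewrite /d /cut_edges !inE.
    by case: (ends x false == t) /eqP => //= _; case: (ends x true == t) /eqP.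
  have := trail_ext hT hxT hd => /hmax'; rewrite size_rcons -hsz ltnn //.
have hcirc : is_circuit ends (a :: s) by rewrite /is_circuit hT hcl.
have hcyc : cycle (arel ends) (a :: s).
  by move: hcirc; rewrite circuitE => /and3P [].
have hu : uniq [seq a.1 | a <- a :: s] by move: hT => /andP [].
exists (a :: s); split => //.
apply: uniq_perm => //; first exact: enum_uniq.
move=> x0; rewrite mem_enum; apply/negPn/negP => hx0.
set S := [set v | has (fun a' => Defs.tail ends a' == v) (a :: s)].
have hheadS : forall a', a' \in a :: s -> Defs.head ends a' \in S.
  move=> a' ha'; rewrite inE; apply/hasP; exists (next (a :: s) a').
    by rewrite mem_next.
  by have := next_cycle hcyc ha'; rewrite /arel eq_sym.
have htailS : forall a', a' \in a :: s -> Defs.tail ends a' \in S.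
  by move=> a' ha'; rewrite inE; apply/hasP; exists a'.
have [y hyT [dd hyd]] : exists2 y, y \notin [seq a.1 | a <- a :: s] & exists dd, ends y dd \in S.
  apply: NNPP => hn.
  have hno : forall y, y \notin [seq a.1 | a <- a :: s] -> forall dd, ends y dd \notin S.
    move=> y hy dd; apply/negP => hS; apply: hn; exists y => //; by exists dd.
  have hends : forall y dd, ends y dd \in S -> ends y (~~ dd) \in S.
    move=> y dd hS; case hy: (y \in [seq a.1 | a <- a :: s]); last first.
      by move: (hno y (negbT hy) dd); rewrite hS.
    move: hy => /mapP [a' ha' ->]; case: a' ha' => y' d' ha' /=.
    have ht := htailS _ ha'; have hh := hheadS _ ha'.
    move: ht hh; rewrite /Defs.tail /Defs.head /=.
    by clear ha'; case: d'; case: dd hS => /= h0 h1 h2.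
  have hclo : closed (adj ends) (mem S).
    move=> u v /existsP [y /orP [/andP [/eqP h1 /eqP h2]|/andP [/eqP h1 /eqP h2]]];
      rewrite -h1 -h2 /=; apply/idP/idP => h.
    - by have := hends _ _ h.
    - by have := hends _ _ h.
    - by have := hends _ _ h.
    - by have := hends _ _ h.
  have hc := closed_connect hclo (heul.1 (Defs.tail ends a) (ends x0 false)).
  move: (htailS a (mem_head _ _)); rewrite hc => hS.
  by move: (hno x0 hx0 false); rewrite hS.
move: hyd; rewrite inE => /hasP [a' ha' /eqP hv].
move: ha' hcirc hT hu hyT hsz; case/splitPr => T1 T2 hcirc hT hu hyT hsz.
have hc' : is_circuit ends (a' :: T2 ++ T1).
  move: hcirc; rewrite !circuitE => /and3P [_ hu' hcy].
  have -> : a' :: T2 ++ T1 = rot (size T1) (T1 ++ a' :: T2) by rewrite rot_size_cat.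
  by rewrite map_rot rot_uniq rot_cycle hu' hcy andbT -size_eq0 size_rot size_cat addnS.
have hyT' : y \notin [seq a.1 | a <- a' :: T2 ++ T1].
  move: hyT; apply: contra; rewrite !map_cat /= !mem_cat !inE.
  rewrite map_cat mem_cat; by case: (y == a'.1) => //=; rewrite orbC.
move: hc' => /andP [hT' /eqP hl'].
have := trail_ext hT' hyT' (etrans (esym hv) (esym hl')) => /hmax'.
rewrite size_rcons -hsz /= !size_cat /=. lia.
Qed.

End Euler.

Lemma sum_E (E : finType) (e : E) (F : E -> nat) :
  \sum_(x : E) F x = \sum_(x : {x : E | x != e}) F (val x) + F e.
Proof.
rewrite (bigD1 e) //= addnC; congr (_ + _).
by have := big_sub (op := addn) (fun x : E => x != e) F => ->.
Qed.

Lemma sum_red (E : finType) (e : E) (F : red_edge e -> nat) :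
  \sum_(y : red_edge e) F y = \sum_(x : {x : E | x != e}) F (inl x) + (F (inr true) + F (inr false)).
Proof. by rewrite big_sumType /= big_bool. Qed.

Lemma card_c1 (T : finType) (c : bool) (a : T) : #|[set Y | c && (Y == a)]| = c.
Proof.
case: c => /=; last by rewrite -(cards0 T); apply: eq_card => Y; rewrite !inE.
by rewrite -(cards1 a); apply: eq_card => Y; rewrite !inE.
Qed.

Section Red.
Variables (V E : finType) (ends : E -> bool -> V) (b : V) (e : E).
Local Notation R := (red_edge e).
Local Notation rends := (red_ends ends b (e := e)).
Local Notation u := (ends e false).
Local Notation w := (ends e true).
Hypotheses (hub : u != b) (hwb : w != b).

Definition Inv (g : E -> bool) (gh : R -> bool) :=
  (forall x, gh (inl x) = g (val x)) /\ gh (inr true) (+) gh (inr false) = g e.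

Lemma Inv_shift g gh v : Inv g gh -> Inv (shift ends v g) (shift rends v gh).
Proof.
move=> [h1 h2]; split.
  by move=> x; rewrite /shift /= h1.
move: h2; rewrite /shift /=.
case: (u == v); case: (w == v); case: (b == v); case: (gh (inr true)); case: (gh (inr false));
  case: (g e) => //=.
Qed.

Lemma shift_transfer gam ghat gh' : Inv gam ghat -> is_shifting rends ghat gh' ->
  exists g', is_shifting ends gam g' /\ Inv g' gh'.
Proof.
move=> hI [l ->]; exists (foldl (fun g v => shift ends v g) gam l); split; first by exists l.
elim: l gam ghat hI => //= v l IH gam ghat hI.
by apply: IH; apply: Inv_shift.
Qed.

Lemma comp_red (X : {set V}) v : b \in X -> v \notin X ->
  u \notin comp rends X v -> w \notin comp rends X v ->
  comp ends X v = comp rends X v.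
Proof.
move=> hbX hv hu hw.
have sub1 : subrel (adj_out rends X) (adj_out ends X).
  move=> y z /adj_outP [hy hz [yy hyy]]; rewrite /adj_out hy hz /=; apply/existsP.
  case: yy hyy => [x|[] ] /= hyy; first by exists (val x).
    by move: hyy => /orP [/andP [_ /eqP hh]|/andP [_ /eqP hh]]; move: hz hy; rewrite -hh hbX /= ?andbF.
  by move: hyy => /orP [/andP [_ /eqP hh]|/andP [_ /eqP hh]]; move: hz hy; rewrite -hh hbX /= ?andbF.
apply/setP => t; rewrite !inE; apply/idP/idP; last first.
  by apply: connect_sub => y z /sub1 h; apply: connect1.
have hcl : closed (adj_out ends X) (mem (comp rends X v)).
  have step : forall y z, adj_out ends X y z -> y \in comp rends X v -> z \in comp rends X v.
    move=> y z /adj_outP [hy hz [x hx]] hyc.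
    have hx' : x != e.
      apply/eqP => hxe; move: hx; rewrite hxe => /orP [/andP [/eqP h _]|/andP [_ /eqP h]].
        by move: hyc; rewrite -h (negbTE hu).
      by move: hyc; rewrite -h (negbTE hw).
    have ha : adj_out rends X y z.
      rewrite /adj_out hy hz /=; apply/existsP; exists (inl (exist _ x hx')); exact: hx.
    by rewrite inE (connect_trans _ (connect1 ha)) //; move: hyc; rewrite inE.
  move=> y z hyz; apply/idP/idP; first exact: step.
  move=> hzc; apply: (step z y) => //; move: hyz; rewrite /adj_out adj_sym; by case: (y \in X); case: (z \in X).
move=> hc; have := closed_connect hcl hc; rewrite comp_self => /esym.
by rewrite inE.
Qed.

Lemma odd_red (Y : {set V}) g' gh' : Inv g' gh' -> b \notin Y ->
  u \notin Y -> w \notin Y -> is_odd_set rends gh' Y = is_odd_set ends g' Y.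
Proof.
move=> [h1 h2] hb hu hw; rewrite /is_odd_set /wcount !touch_setE.
have e1 : touch rends Y (inr true) = false by rewrite /touch /= (negbTE hu) (negbTE hb).
have e2 : touch rends Y (inr false) = false by rewrite /touch /= (negbTE hw) (negbTE hb).
have e3 : touch ends Y e = false by rewrite /touch /= (negbTE hw) (negbTE hu).
have -> : #|[set x in [set x | touch rends Y x] | gh' x]| = #|[set x in [set x | touch ends Y x] | g' x]|.
  have m1 : forall y, (y \in [set x | touch rends Y x]) = touch rends Y y by move=> y; rewrite inE.
  have m2 : forall y, (y \in [set x | touch ends Y x]) = touch ends Y y by move=> y; rewrite inE.
  rewrite !card_sum_bool sum_red (sum_E e) !m1 m2 e1 e2 e3 /= !addn0.
  by apply: eq_bigr => x _; rewrite m1 m2 /touch /= h1.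
have -> : #|cut_edges rends Y| = #|cut_edges ends Y|.
  have m1 : forall y, (y \in cut_edges rends Y) = ((rends y false \in Y) != (rends y true \in Y)).
    by move=> y; rewrite inE.
  have m2 : forall y, (y \in cut_edges ends Y) = ((ends y false \in Y) != (ends y true \in Y)).
    by move=> y; rewrite inE.
  rewrite [#|cut_edges rends Y|]card_countA [#|cut_edges ends Y|]card_countA !card_sum_bool sum_red (sum_E e) !m1 m2 /=.
  rewrite (negbTE hb) (negbTE hu) (negbTE hw) /= !addn0.
  by apply: eq_bigr => x _; rewrite m1 m2.
by [].
Qed.

Lemma odd_cmp (X : {set V}) g' gh' : b \in X -> Inv g' gh' ->
  odd_components rends gh' X <= odd_components ends g' X + (u \notin X) + (w \notin X).
Proof.
move=> hbX hI; rewrite /odd_components.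
have hsub : [set Y | is_component_out rends X Y && is_odd_set rends gh' Y] \subset
   [set Y | is_component_out ends X Y && is_odd_set ends g' Y] :|:
   ([set Y | (u \notin X) && (Y == comp rends X u)] :|:
    [set Y | (w \notin X) && (Y == comp rends X w)]).
  apply/subsetP => Y; rewrite !inE !is_component_outE => /andP [hY hodd].
  move: (hY) => /imsetP [v]; rewrite inE => hv hYv.
  case hu' : (u \in Y).
    have huY : u \in comp rends X v by rewrite -hYv.
    have hux := comp_outside hv huY.
    by rewrite hux hYv (comp_eq huY) eqxx !orbT.
  case hw' : (w \in Y).
    have hwY : w \in comp rends X v by rewrite -hYv.
    have hwx := comp_outside hv hwY.
    by rewrite hwx hYv (comp_eq hwY) eqxx !orbT.
  have hbY : b \notin Y by rewrite hYv; apply/negP => /(comp_outside hv); rewrite hbX.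
  rewrite -(odd_red hI hbY (negbT hu') (negbT hw')) hodd andbT.
  rewrite hYv -comp_red //; first by rewrite comp_in_comps.
  - by rewrite -hYv hu'.
  - by rewrite -hYv hw'.
apply: (leq_trans (subset_leq_card hsub)); apply: (leq_trans (leq_card_setU _ _)).
rewrite -addnA leq_add2l; apply: (leq_trans (leq_card_setU _ _)); by rewrite !card_c1.
Qed.

Lemma half2 n : (n + 1 + 1)./2 = n./2 + 1.
Proof. by rewrite !addn1. Qed.

Lemma bound_cmp (X : {set V}) g' gh' : b \in X -> Inv g' gh' ->
  wcount g' (inner_edges ends X) + #|cut_edges ends X|./2 + odd_components rends gh' X <=
  wcount gh' (inner_edges rends X) + #|cut_edges rends X|./2 + odd_components ends g' X + 1.
Proof.
move=> hbX hI; have ho := odd_cmp hbX hI; move: hI => [h1 h2].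
have m1 : forall y, (y \in inner_edges rends X) = (rends y false \in X) && (rends y true \in X).
  by move=> y; rewrite inE.
have m2 : forall y, (y \in inner_edges ends X) = (ends y false \in X) && (ends y true \in X).
  by move=> y; rewrite inE.
have m3 : forall y, (y \in cut_edges rends X) = ((rends y false \in X) != (rends y true \in X)).
  by move=> y; rewrite inE.
have m4 : forall y, (y \in cut_edges ends X) = ((ends y false \in X) != (ends y true \in X)).
  by move=> y; rewrite inE.
have hW : wcount gh' (inner_edges rends X) =
   wcount g' (inner_edges ends X) - ((u \in X) && (w \in X) && g' e) +
   ((u \in X) && gh' (inr true)) + ((w \in X) && gh' (inr false)).
  rewrite /wcount !card_sum_bool sum_red (sum_E e) !m1 m2 /= hbX !andbT.
  have -> : \sum_(x : {x : E | x != e}) ((inl x \in inner_edges rends X) && gh' (inl x) : nat) =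
     \sum_(x : {x : E | x != e}) ((sval x \in inner_edges ends X) && g' (sval x) : nat).
    by apply: eq_bigr => x _; rewrite m1 m2 h1.
  by rewrite addnK addnA.
have hC : #|cut_edges rends X| =
   #|cut_edges ends X| - ((u \in X) != (w \in X)) + (u \notin X) + (w \notin X).
  rewrite [#|cut_edges rends X|]card_countA [#|cut_edges ends X|]card_countA !card_sum_bool sum_red (sum_E e) !m3 m4 /= hbX.
  have -> : \sum_(x : {x : E | x != e}) ((inl x \in cut_edges rends X) : nat) =
     \sum_(x : {x : E | x != e}) ((sval x \in cut_edges ends X) : nat).
    by apply: eq_bigr => x _; rewrite m3 m4.
  rewrite addnK -addnA.
  by case: (u \in X); case: (w \in X).
rewrite hW hC; move: ho h2.
have hWe : (u \in X) && (w \in X) && g' e <= wcount g' (inner_edges ends X).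
  rewrite /wcount card_sum_bool (sum_E e) m2 /=; lia.
have hCe : ((u \in X) != (w \in X)) <= #|cut_edges ends X|.
  rewrite card_countA card_sum_bool (sum_E e) m4 /=; lia.
move: hWe hCe.
set W := wcount g' _; set C := #|cut_edges ends X|; set oh := odd_components rends gh' X;
  set og := odd_components ends g' X.
case: (u \in X); case: (w \in X); case: (gh' (inr true)); case: (gh' (inr false));
  case: (g' e) => //= hWe hCe ho; rewrite ?subn0 ?addn0.
all: try lia.
all: rewrite -?(subnK hCe) ?addnK ?subn1 ?half2.
all: lia.
Qed.

End Red.

Lemma edge_at_b (V E : finType) (ends : E -> bool -> V) (b : V) (e : E) :
  eulerian ends -> ends e false != b -> exists x, (ends x false == b) || (ends x true == b).
Proof.
move=> [hc _] hub; have := hc b (ends e false) => /connectP [p hp hl].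
case: p hp hl => [|y p] /=; first by move=> _ h; move: hub; rewrite -h eqxx.
move=> /andP [/existsP [x hx] _] _; exists x.
by move: hx => /orP [/andP [/eqP -> _]|/andP [_ /eqP ->]]; rewrite eqxx ?orbT.
Qed.

Lemma shifting_refl (V E : finType) (ends : E -> bool -> V) g : is_shifting ends g g.
Proof. by exists [::]. Qed.

Lemma get_decomp (V E : finType) (ends : E -> bool -> V) (gam : E -> bool) (b : V) (e : E) :
  eulerian ends -> ends e false != b ->
  exists D, [/\ circuit_decomposition ends D, all (hits ends b) D &
    count (nonzero gam) D = flooding_number ends gam b].
Proof.
move=> heul hub.
case: (flooding_spec ends gam b) => [[[D [hfl hs]] hmax]|[hN0 hnone]].
  move: hfl => /andP [hD hall]; exists D; split => //.
    by apply/allP => C hC; move/allP: hall => /(_ C hC) /andP [].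
  rewrite -hs; apply/eqP; rewrite -all_count; apply/allP => C hC.
  by move/allP: hall => /(_ C hC) /andP [].
have [T [hT hp]] := euler_tour heul e.
have hD : circuit_decomposition ends [:: T].
  by rewrite /circuit_decomposition /= hT /= cats0.
have hhit : hits ends b T.
  have [x hx] := edge_at_b heul hub.
  have : x \in [seq a.1 | a <- T] by rewrite (perm_mem hp) mem_enum.
  move=> /mapP [a ha hxa]; apply/hasP; exists a => //.
  move: hx; rewrite /Defs.tail /Defs.head hxa; case: a ha hxa => x' [] _ /= _.
    by rewrite orbC.
  by [].
exists [:: T]; split => //=; first by rewrite hhit.
rewrite hN0 addn0; case hnz: (nonzero gam T) => //.
exfalso; apply: (hnone [:: T]).
by rewrite /flooding_decomposition hD /= hnz hhit.
Qed.

Lemma int_cert (N W O : nat) : (N%:Z = W%:Z - O%:Z)%R -> N + O = W.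
Proof.
move=> h; have : (W%:Z = N%:Z + O%:Z)%R by rewrite h GRing.subrK.
by rewrite -PoszD => -[].
Qed.

Unset Implicit Arguments.

Theorem mainTheorem7 (V E : finType) (ends : E -> bool -> V) (gam : E -> bool)
    (b : V) (e : E) (ghat : red_edge e -> bool) :
  eulerian ends ->
  ends e false != b -> ends e true != b ->
  (forall x : {x : E | x != e}, ghat (inl x) = gam (val x)) ->
  ghat (inr true) (+) ghat (inr false) = gam e ->
  (flooding_number (red_ends ends b (e := e)) ghat b
     <= (flooding_number ends gam b).+1)%N ->
  has_certificate (red_ends ends b (e := e)) ghat b ->
  has_certificate ends gam b.
Proof.
move=> heul hub hwb hinl hinr hle [X [gh' [hsh [hbX hcert]]]].
have hI : Inv gam ghat by split.
have [g' [hsh' hI']] := shift_transfer hI hsh.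
exists X, g'; split => //; split => //.
set N := flooding_number ends gam b in hle *.
set Nh := flooding_number _ ghat b in hle hcert.
have [D [hD hhit hnz]] := get_decomp gam heul hub.
have hwd := weak_duality hsh' hbX hD hhit.
have hpar := bound_parity g' X hD.
have hpar2 := decomp_weight_parity hsh' hD.
have hcmp := bound_cmp hub hwb hbX hI'.
have hc := int_cert hcert.
have hgam : odd #|[set x | gam x]| = odd N.
  by rewrite (decomp_weight_parity (shifting_refl ends gam) hD) hnz.
have hNh : Nh <= N.
  rewrite leq_eqVlt in hle; case/orP: hle => [/eqP hNh|]; last by rewrite ltnS.
  exfalso.
  case: (flooding_spec (red_ends ends b (e := e)) ghat b) => [[[Dh [hfl hs]] _]|[h0 _]];
    last by move: hNh; rewrite /Nh h0.
  move: hfl => /andP [hDh hall].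
  have h1 := decomp_weight_parity (shifting_refl _ ghat) hDh.
  have h2 : count (nonzero ghat) Dh = size Dh.
    apply/eqP; rewrite -all_count; apply/allP => C hC.
    by move/allP: hall => /(_ C hC) /andP [].
  have h3 : odd #|[set x | ghat x]| = odd #|[set x | gam x]|.
    rewrite !card_sum_bool sum_red (sum_E e) -hinr.
    have -> : \sum_(x : {x : E | x != e}) (ghat (inl x) : nat) = \sum_(x : {x : E | x != e}) (gam (val x) : nat).
      by apply: eq_bigr => x _; rewrite hinl.
    rewrite !oddD.
    by case: (ghat (inr true)); case: (ghat (inr false)).
  move: h3; rewrite h1 h2 hs -/Nh hNh hgam /=.
  by case: (odd N).
rewrite hpar2 hnz -/N in hpar.
have hev := odd_double_half (wcount g' (inner_edges ends X) + #|cut_edges ends X|./2 +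
   odd_components ends g' X + N).
rewrite oddD hpar addbb /= add0n -muln2 in hev.
suff : N + odd_components ends g' X = wcount g' (inner_edges ends X) + #|cut_edges ends X|./2.
  move=> h; rewrite -h PoszD GRing.addrK //.
move: hwd hcmp hc hev hNh; rewrite hnz.
set W := wcount g' _; set C := _./2; set oG := odd_components _ g' X.
set Wh := wcount gh' _; set Ch := _./2; set oH := odd_components _ gh' X.
lia.
Qed.
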